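(* Let $\mathcal{C}$ be a binary linear $[n,k,d]$ code and let $s$ be an integer with $1\le s\le\min(d-1,n-k)$ such that $\mathrm{Aut}(\mathcal{C})$ is $s$-fold transitive. Then there exists a parity-check matrix $\mathbf{H}$ of $\mathcal{C}$ such that for every $b\le s$ and every $I\subseteq J$ with $1\le|I|\le b$, some $\pi\in\mathrm{Aut}(\mathcal{C})$ maps $I$ to a set $\pi(I)$ that is not a stopping set of $\mathbf{H}$; in particular, $b$-SAD sets of $\mathbf{H}$ exist for all $b\le s$.
   Context: Coordinates are indexed by $J=\{0,\ldots,n-1\}$. For a binary matrix, a row resolves a nonempty $I\subseteq J$ if its restriction to $I$ has Hamming weight exactly one; $I$ is a stopping set if no row resolves it. A parity-check matrix of $\mathcal{C}$ is an $(n-k)\times n$ binary matrix of full row rank whose row space is $\mathcal{C}^\perp$. $\mathrm{Aut}(\mathcal{C})$ is the group of permutations of $J$ mapping $\mathcal{C}$ onto itself. A permutation group on $J$ is $t$-fold transitive if for any two ordered $t$-tuples of distinct elements $(i_1,\ldots,i_t)$ and $(j_1,\ldots,j_t)$ of $J$ there is a group element mapping $i_r$ to $j_r$ for all $r$. For $b\le d-1$, a $b$-SAD set of $\mathbf{H}$ is a smallest set $S\subseteq\mathrm{Aut}(\mathcal{C})$ such that every $I\subseteq J$ with $1\le|I|\le b$ is mapped by some $\pi\in S$ to a set that is not a stopping set of $\mathbf{H}$. *)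

(* Defs.v *)
From HB Require Import structures.
From mathcomp Require Import all_boot all_order all_algebra all_fingroup.
Set Implicit Arguments. Unset Strict Implicit. Unset Printing Implicit Defensive.
Import GRing.Theory.
Local Open Scope ring_scope.

(* Coordinates J = 'I_n.  A binary linear code C of length n is the row space
   of a matrix C : 'M['F_2]_n (mxalgebra convention); v is a codeword iff
   (v <= C)%MS. Its dimension is \rank C. *)

Definition codeword n (C : 'M['F_2]_n) (v : 'rV['F_2]_n) : bool := (v <= C)%MS.

Definition wt n (v : 'rV['F_2]_n) : nat := #|[set j : 'I_n | v 0 j != 0]|.

Definition min_dist n (C : 'M['F_2]_n) (d : nat) : Prop :=
  (exists2 c, codeword C c & (c != 0) && (wt c == d)) /\
  (forall c, codeword C c -> c != 0 -> (d <= wt c)%N).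

Definition is_code n (C : 'M['F_2]_n) (k d : nat) : Prop :=
  \rank C = k /\ min_dist C d.

(* coordinate permutation: the permuted vector has v_i at position pi(i) *)
Definition permv n (pi : {perm 'I_n}) (v : 'rV['F_2]_n) : 'rV['F_2]_n :=
  \row_j v 0 ((pi^-1)%g j).

Definition in_Aut n (C : 'M['F_2]_n) (pi : {perm 'I_n}) : Prop :=
  forall v, codeword C (permv pi v) = codeword C v.

Definition t_transitive n (C : 'M['F_2]_n) (t : nat) : Prop :=
  forall i j : 'I_t -> 'I_n, injective i -> injective j ->
    exists2 pi, in_Aut C pi & forall r, pi (i r) = j r.

Definition in_dual n (C : 'M['F_2]_n) (u : 'rV['F_2]_n) : Prop :=
  forall c, codeword C c -> u *m c^T = 0.

Definition parity_check n k (C : 'M['F_2]_n) (H : 'M['F_2]_(n - k, n)) : Prop :=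
  \rank H = (n - k)%N /\ forall u, (u <= H)%MS <-> in_dual C u.

Definition resolves m n (H : 'M['F_2]_(m, n)) (r : 'I_m) (I : {set 'I_n}) : bool :=
  #|[set j in I | H r j != 0]| == 1%N.

Definition stopping m n (H : 'M['F_2]_(m, n)) (I : {set 'I_n}) : bool :=
  (I != set0) && [forall r, ~~ resolves H r I].

Definition covers m n (C : 'M['F_2]_n) (H : 'M['F_2]_(m, n)) (b : nat)
  (S : {set {perm 'I_n}}) : Prop :=
  (forall pi, pi \in S -> in_Aut C pi) /\
  forall I : {set 'I_n}, (1 <= #|I| <= b)%N ->
    exists2 pi, pi \in S & ~~ stopping H (pi @: I).

Definition SAD m n (C : 'M['F_2]_n) (H : 'M['F_2]_(m, n)) (b : nat)
  (S : {set {perm 'I_n}}) : Prop :=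
  covers C H b S /\ forall S', covers C H b S' -> (#|S| <= #|S'|)%N.

(* Main.v *)
Require Import Defs.
From HB Require Import structures.
From mathcomp Require Import all_boot all_order all_algebra all_fingroup.
From Stdlib Require Import Classical.
Set Implicit Arguments. Unset Strict Implicit. Unset Printing Implicit Defensive.
Import GRing.Theory.
Local Open Scope ring_scope.

Lemma dual_iff n (C : 'M['F_2]_n) u : in_dual C u <-> u *m C^T = 0.
Proof.
split.
- move=> H; apply/rowP => i.
  have := H (row i C) (row_sub i C).
  rewrite tr_row colE mulmxA -colE => /matrixP /(_ 0 0).
  by rewrite !mxE.
- move=> H c /submxP [w ->]; by rewrite trmx_mul mulmxA H mul0mx.
Qed.

Lemma double_dual n (C : 'M['F_2]_n) (x : 'rV_n) :
  x *m (kermx C^T)^T = 0 -> (x <= C)%MS.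
Proof.
move=> hx.
set K := kermx C^T.
set W := col_mx C x.
have hK : (K <= kermx W^T)%MS.
  apply/sub_kermxP; rewrite /W tr_col_mx mul_mx_row mulmx_ker.
  have -> : K *m x^T = 0 by rewrite -[K *m _]trmxK trmx_mul trmxK hx trmx0.
  by rewrite row_mx0.
have r1 := mxrankS hK.
rewrite !mxrank_ker !mxrank_tr leq_sub2lE ?rank_leq_col // in r1.
have hCW : (C <= W)%MS by rewrite -(addsmxE C x) addsmxSl.
have := mxrank_leqif_sup hCW.
move=> [_ e]; move: e.
have -> : (\rank C == \rank W) by rewrite eqn_leq mxrankS //.
move=> /esym hWC.
apply: submx_trans hWC; by rewrite -(addsmxE C x) addsmxSr.
Qed.
Lemma sum_ind n (g : 'I_n -> 'F_2) a : \sum_j g j * (a == j)%:R = g a.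
Proof.
rewrite (bigD1 a) //= eqxx mulr1 big1 ?addr0 // => j /negbTE hj.
by rewrite eq_sym hj mulr0.
Qed.

Lemma sum_ind_inj s n (f : 'I_s -> 'I_n) (g : 'I_s -> 'F_2) i0 :
  injective f -> \sum_i g i * (f i == f i0)%:R = g i0.
Proof.
move=> finj; rewrite (bigD1 i0) //= eqxx mulr1 big1 ?addr0 // => j hj.
by rewrite (inj_eq finj) (negbTE hj) mulr0.
Qed.

Lemma Dunit m s (U : 'M['F_2]_s) : (s <= m)%N -> U \in unitmx ->
  ((pid_mx s : 'M['F_2]_(m,s)) *m invmx U *m (pid_mx s : 'M['F_2]_(s,m)) + copid_mx s) \in unitmx.
Proof.
move=> hs hU.
have e1 : (pid_mx s : 'M['F_2]_(s,m)) *m (pid_mx s : 'M['F_2]_(m,s)) = 1%:M by rewrite pid_mx_id // pid_mx_1.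
have e2 : (pid_mx s : 'M['F_2]_(s,m)) *m copid_mx s = 0 by rewrite mul_pid_mx_copid.
have e3 : copid_mx s *m (pid_mx s : 'M['F_2]_(m,s)) = 0 by rewrite mul_copid_mx_pid.
have e4 : copid_mx s *m copid_mx s = copid_mx s :> 'M['F_2]_m by rewrite copid_mx_id.
have e5 : (pid_mx s : 'M['F_2]_(m,s)) *m (pid_mx s : 'M['F_2]_(s,m)) + copid_mx s = 1%:M.
  by rewrite pid_mx_id // /copid_mx addrC subrK.
move: (copid_mx s) e2 e3 e4 e5 => c e2 e3 e4 e5.
move: (pid_mx s : 'M['F_2]_(m,s)) (pid_mx s : 'M['F_2]_(s,m)) e1 e2 e3 e5 => p1 p2 e1 e2 e3 e5.
set D := (X in X \in unitmx).
suff: D *m (p1 *m U *m p2 + c) = 1%:M by case/mulmx1_unit.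
rewrite /D mulmxDl !mulmxDr.
rewrite -!mulmxA (mulmxA p2 p1) e1 mul1mx (mulmxA (invmx U) U) mulVmx // mul1mx.
rewrite e2 !mulmx0 addr0 (mulmxA c p1) e3 !mul0mx add0r e4.
exact: e5.
Qed.

Lemma build_H m n s (H0 : 'M['F_2]_(m,n)) (f : 'I_s -> 'I_n) (hs : (s <= m)%N) :
  injective f ->
  (forall x : 'rV_n, x *m H0^T = 0 -> (forall j, j \notin codom f -> x 0 j = 0) -> x = 0) ->
  exists H : 'M['F_2]_(m,n), (H :=: H0)%MS /\
     forall r r2, H (widen_ord hs r) (f r2) = (r == r2)%:R.
Proof.
move=> finj hker.
pose P : 'M['F_2]_(s,n) := \matrix_(i, j) (f i == j)%:R.
have hMP : forall (M : 'M['F_2]_(m,n)) r i, (M *m P^T) r i = M r (f i).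
  by move=> M r i; rewrite mxE -(sum_ind (M r)); apply: eq_bigr => j _; rewrite !mxE.
pose A := H0 *m P^T.
have rkA : \rank A = s.
  have : kermx A^T == 0.
    apply/eqP/row_matrixP => i; rewrite row0.
    set z := row i (kermx A^T).
    have hz : z *m A^T = 0 by rewrite /z -row_mul mulmx_ker row0.
    pose x := z *m P.
    have hx0 : x = 0.
      apply: hker.
        by rewrite /x -mulmxA -[P *m _]trmxK trmx_mul trmxK -/A hz.
      move=> j hj; rewrite /x mxE big1 // => i0 _; rewrite [P _ _]mxE.
      case: (f i0 =P j) => [e|]; last by rewrite mulr0.
      by move: hj; rewrite -e codom_f.
    apply/rowP => i0; rewrite [RHS]mxE.
    have := congr1 (fun v : 'rV_n => v 0 (f i0)) hx0; rewrite /= [RHS]mxE => <-.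
    rewrite /x [(z *m P) _ _]mxE -(sum_ind_inj (fun i => z 0 i) i0 finj).
    by apply: eq_bigr => i1 _; rewrite [P _ _]mxE.
  rewrite kermx_eq0 /row_free mxrank_tr => /eqP.
  done.
pose L := col_ebase A; pose U := row_ebase A.
have ep : pid_mx (\rank A) = pid_mx s :> 'M['F_2]_(m,s) by rewrite rkA.
have eA : A = L *m pid_mx s *m U by rewrite /L /U -ep mulmx_ebase.
pose D : 'M['F_2]_m := (pid_mx s : 'M['F_2]_(m,s)) *m invmx U *m (pid_mx s : 'M['F_2]_(s,m)) + copid_mx s.
pose N := D *m invmx L.
have hN : N \in unitmx.
  by rewrite unitmx_mul Dunit ?row_ebase_unit // unitmx_inv col_ebase_unit.
exists (N *m H0); split.
  by apply: eqmxMfull; rewrite row_full_unit.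
have eNA : N *m A = pid_mx s.
  rewrite eA /N -!mulmxA (mulmxA (invmx L) L) mulVmx ?col_ebase_unit // mul1mx.
  rewrite /D mulmxDl (mulmxA (copid_mx s)) mul_copid_mx_pid // mul0mx addr0.
  rewrite -!mulmxA (mulmxA (pid_mx s : 'M['F_2]_(s,m)) (pid_mx s : 'M['F_2]_(m,s))).
  rewrite pid_mx_id // pid_mx_1 mul1mx mulVmx ?row_ebase_unit //.
  by rewrite mulmx1.
move=> r r2.
rewrite -hMP -mulmxA -/A eNA mxE /=.
by rewrite ltn_ord andbT.
Qed.

Lemma H0_ex n k (C : 'M['F_2]_n) : \rank C = k ->
  exists H0 : 'M['F_2]_(n-k,n), \rank H0 = (n-k)%N /\ (H0 :=: kermx C^T)%MS.
Proof.
move=> hk.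
have e : \rank (kermx C^T) = (n - k)%N by rewrite mxrank_ker mxrank_tr hk.
suff: forall p, p = \rank (kermx C^T) ->
  exists H0 : 'M['F_2]_(p,n), \rank H0 = p /\ (H0 :=: kermx C^T)%MS.
  by move/(_ _ (esym e)).
move=> p ->; exists (row_base (kermx C^T)); split.
  by rewrite eq_row_base.
exact: eq_row_base.
Qed.

Lemma superset n (I : {set 'I_n}) s : (#|I| <= s)%N -> (s <= n)%N ->
  exists I2 : {set 'I_n}, I \subset I2 /\ #|I2| = s.
Proof.
move=> h1 h2.
have [d ed] : exists d, s = (#|I| + d)%N by exists (s - #|I|)%N; rewrite subnKC.
elim: d I h1 ed => [|d IH] I h1 ed.
  by exists I; split => //; rewrite ed addn0.
case: (pickP [pred x | x \notin I]) => [x hx|h].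
  have hx' : x \notin I by [].
  have c1 : (#|x |: I| <= s)%N by rewrite ed cardsU1 hx' /= add1n addnS ltnS leq_addr.
  have c2 : s = (#|x |: I| + d)%N by rewrite ed cardsU1 hx' /= add1n addSn addnS.
  have [I2 [h3 h4]] := IH (x |: I) c1 c2.
  exists I2; split => //; apply: subset_trans h3; exact: subsetUr.
exfalso.
have eI : I = setT by apply/setP => x; have := h x; rewrite !inE /= => /negbFE ->.
move: h2; rewrite ed eI cardsT card_ord addnS ltnNge leq_addr //.
Qed.

Lemma map_into n s (C : 'M['F_2]_n) (f : 'I_s -> 'I_n) :
  injective f -> t_transitive C s -> (s <= n)%N ->
  forall I : {set 'I_n}, (#|I| <= s)%N ->
  exists2 pi, in_Aut C pi & forall x, x \in I -> pi x \in codom f.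
Proof.
move=> finj htr hsn I hI.
have [I2 [hsub e]] := superset hI hsn.
pose i (r : 'I_s) : 'I_n := enum_val (cast_ord (esym e) r).
have iinj : injective i by move=> a b /enum_val_inj /cast_ord_inj.
have [pi hpi hpij] := htr i f iinj finj.
exists pi => // x hx.
have hx2 : x \in I2 by apply: (subsetP hsub).
have -> : x = i (cast_ord e (enum_rank_in hx2 x)).
  by rewrite /i cast_ordK enum_rankK_in.
by rewrite hpij codom_f.
Qed.

Lemma nonstop m n s (H : 'M['F_2]_(m,n)) (f : 'I_s -> 'I_n) (hs : (s <= m)%N) :
  injective f -> (forall r r2, H (widen_ord hs r) (f r2) = (r == r2)%:R) ->
  forall I' : {set 'I_n}, I' != set0 -> (forall x, x \in I' -> x \in codom f) ->
  ~~ stopping H I'.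
Proof.
move=> finj hH I' /set0Pn [y hy] hsub.
have /codomP [r ey] := hsub y hy.
rewrite /stopping negb_and; apply/orP; right.
rewrite negb_forall; apply/existsP; exists (widen_ord hs r); rewrite negbK /resolves.
suff -> : [set j in I' | H (widen_ord hs r) j != 0] = [set y] by rewrite cards1.
apply/setP => j; rewrite !inE.
case hj: (j \in I') => /=.
  have /codomP [r2 ej] := hsub j hj.
  rewrite ej ey hH (inj_eq finj).
  case: (r =P r2) => [->|hne]; first by rewrite eqxx oner_neq0.
  have -> : (false%:R != 0 :> 'F_2) = false by []. 
  apply/esym/eqP => e; apply: hne; by rewrite e.
by apply/esym/negbTE; apply: contraFN hj => /eqP ->.
Qed.

Lemma SAD_ex m n (C : 'M['F_2]_n) (H : 'M['F_2]_(m,n)) b :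
  (exists S, covers C H b S) -> exists S, SAD C H b S.
Proof.
move=> [S hS].
suff: forall k (S : {set {perm 'I_n}}), (#|S| <= k)%N -> covers C H b S -> exists S, SAD C H b S.
  by move/(_ _ S (leqnn _) hS).
elim=> [|k IH] S0 hk hS0.
  exists S0; split => // S' _; exact: leq_trans hk (leq0n _).
case: (classic (forall S', covers C H b S' -> (#|S0| <= #|S'|)%N)) => [h|h].
  by exists S0; split.
move/not_all_ex_not: h => [S' hS'].
have [hc hlt] := imply_to_and _ _ hS'.
apply: (IH S') => //.
by rewrite -ltnS (leq_trans _ hk) // ltnNge; apply/negP.
Qed.

Theorem lemma5 (n k d s : nat) (C : 'M['F_2]_n) :
  is_code C k d ->
  (1 <= s)%N -> (s <= d - 1)%N -> (s <= n - k)%N ->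
  t_transitive C s ->
  exists H : 'M['F_2]_(n - k, n),
    parity_check C H /\
    forall b, (b <= s)%N ->
      (forall I : {set 'I_n}, (1 <= #|I| <= b)%N ->
         exists2 pi, in_Aut C pi & ~~ stopping H (pi @: I)) /\
      (exists S, SAD C H b S).
Proof.
move=> [hk [_ hd]] s1 hsd hsk htr.
have hsn : (s <= n)%N by apply: leq_trans hsk (leq_subr k n).
pose f := @widen_ord s n hsn.
have finj : injective f by move=> a b /(congr1 val) /= ?; apply: val_inj.
have [H0 [rkH0 eH0]] := H0_ex hk.
have hker : forall x : 'rV_n, x *m H0^T = 0 ->
    (forall j, j \notin codom f -> x 0 j = 0) -> x = 0.
  move=> x hx hsupp.
  have hxC : (x <= C)%MS.
    apply: double_dual.
    have /submxP [W ->] : (kermx C^T <= H0)%MS by rewrite eH0.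
    by rewrite trmx_mul mulmxA hx mul0mx.
  apply/eqP; apply: contraT => hx0.
  have := hd x hxC hx0.
  have hwt : (wt x <= s)%N.
    rewrite /wt -[s]card_ord -cardsT; apply: leq_trans (leq_imset_card f _).
    apply: subset_leq_card; apply/subsetP => j; rewrite inE => hj.
    case: (boolP (j \in codom f)) => [/codomP [r ->]|hn].
      by rewrite imset_f.
    by rewrite hsupp ?eqxx in hj.
  have hd1 : (1 < d)%N by rewrite -subn_gt0 (leq_trans s1 hsd).
  move=> hdw; have := leq_trans hdw (leq_trans hwt hsd).
  by rewrite leqNgt ltn_subrL (ltnW hd1) andbT.
have [H [eH hH]] := build_H hsk finj hker.
exists H; split.
  split; first by rewrite eH rkH0.
  move=> u; rewrite eH eH0 sub_kermx dual_iff; split; first by move/eqP.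
  by move=> ->.
have main : forall I : {set 'I_n}, (1 <= #|I| <= s)%N ->
    exists2 pi, in_Aut C pi & ~~ stopping H (pi @: I).
  move=> I /andP [hI1 hIs].
  have [pi hpi hmap] := map_into finj htr hsn hIs.
  exists pi => //.
  apply: (nonstop finj hH).
    by rewrite -card_gt0 (card_imset _ (@perm_inj _ pi)).
  by move=> x /imsetP [y hy ->]; apply: hmap.
move=> b hb.
have cov : forall I : {set 'I_n}, (1 <= #|I| <= b)%N ->
    exists2 pi, in_Aut C pi & ~~ stopping H (pi @: I).
  move=> I /andP [h1 h2]; apply: main; rewrite h1 (leq_trans h2 hb) //.
split => //.
apply: SAD_ex.
exists [set pi | [forall v, codeword C (permv pi v) == codeword C v]].
split.
  by move=> pi; rewrite inE => /forallP h v; apply/eqP.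
move=> I hI; have [pi hpi hns] := cov I hI.
exists pi => //; rewrite inE; apply/forallP => v; apply/eqP; exact: hpi.
Qed.
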